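(* Let $\mathcal{B}$ be a prime Banach algebra over $\mathbb{R}$ or $\mathbb{C}$, and let $\mathcal{H}_1,\mathcal{H}_2$ be non-empty open subsets of $\mathcal{B}$. Suppose $\mathcal{B}$ admits a continuous automorphism $f$ such that for every $(x,y)\in\mathcal{H}_1\times\mathcal{H}_2$ there exist positive integers $p=p(x,y)$, $q=q(x,y)$ with $$f(x^{p}y^{q})-x^{p}\circ y^{q}\in Z(\mathcal{B}).$$ Then $\mathcal{B}$ is commutative.
   Context: $Z(\mathcal{B})$ denotes the center of $\mathcal{B}$. For $x,y\in\mathcal{B}$, $x\circ y=xy+yx$ and $[x,y]=xy-yx$. $\mathcal{B}$ is prime if $x\mathcal{B}y=\{0\}$ implies $x=0$ or $y=0$. An automorphism of $\mathcal{B}$ is a bijective map $f:\mathcal{B}\to\mathcal{B}$ with $f(x+y)=f(x)+f(y)$ and $f(xy)=f(x)f(y)$ for all $x,y$. *)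

(* Defs.v *)
From HB Require Import structures.
From mathcomp Require Import all_boot all_order all_algebra.
From mathcomp Require Import all_classical all_reals all_analysis.
From mathcomp Require Import complex.
Import Order.TTheory GRing.Theory Num.Theory.
Import numFieldNormedType.Exports.
Local Open Scope ring_scope.
Local Open Scope classical_set_scope.

Definition is_banach_algebra_mul {K : numFieldType}
    {B : completeNormedModType K} (mul : B -> B -> B) : Prop :=
  [/\ (forall x y z, mul x (mul y z) = mul (mul x y) z),
      (forall x y z, mul x (y + z) = mul x y + mul x z),
      (forall x y z, mul (x + y) z = mul x z + mul y z),
      (forall (a : K) x y, mul (a *: x) y = a *: mul x y
                           /\ mul x (a *: y) = a *: mul x y)
    & (forall x y, `|mul x y| <= `|x| * `|y|)].

(* x ^ n for n >= 1 : [bpow mul x n] = x * ... * x (n factors), n >= 1 *)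
Definition bpow {B : Type} (mul : B -> B -> B) (x : B) (n : nat) : B :=
  iter n.-1 (mul x) x.

Definition jordan {B : zmodType} (mul : B -> B -> B) (x y : B) : B :=
  mul x y + mul y x.

Definition center {B : Type} (mul : B -> B -> B) : set B :=
  [set z | forall x, mul z x = mul x z].

Definition prime_alg {B : zmodType} (mul : B -> B -> B) : Prop :=
  forall x y, (forall z, mul (mul x z) y = 0) -> x = 0 \/ y = 0.

Definition is_automorphism {B : zmodType} (mul : B -> B -> B) (f : B -> B)
  : Prop :=
  [/\ bijective f,
      (forall x y, f (x + y) = f x + f y)
    & (forall x y, f (mul x y) = mul (f x) (f y))].

Definition commutative_alg {B : Type} (mul : B -> B -> B) : Prop :=
  forall x y, mul x y = mul y x.

Definition theorem2p4_over (K : numFieldType) : Prop :=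
  forall (B : completeNormedModType K) (mul : B -> B -> B),
    is_banach_algebra_mul (K:=K) (B:=B) mul ->
    prime_alg mul ->
  forall (H1 H2 : set B),
    open H1 -> H1 !=set0 -> open H2 -> H2 !=set0 ->
  forall f : B -> B,
    is_automorphism mul f -> continuous f ->
    (forall x y, H1 x -> H2 y ->
       exists p q : nat, [/\ (0 < p)%N, (0 < q)%N &
         center mul (f (mul (bpow mul x p) (bpow mul y q))
                     - jordan mul (bpow mul x p) (bpow mul y q))]) ->
    commutative_alg mul.

(* Main.v *)
Require Import Defs.
From HB Require Import structures.
From mathcomp Require Import all_boot all_order all_algebra.
From mathcomp Require Import all_classical all_reals all_analysis.
From mathcomp Require Import complex.
From mathcomp Require Import ssrAC ring.
Import Order.TTheory GRing.Theory Num.Theory.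
Import numFieldNormedType.Exports.
Local Open Scope ring_scope.
Local Open Scope classical_set_scope.
Local Open Scope complex_scope.
Set Implicit Arguments.
Unset Strict Implicit.

Section Alg.
Variable K : numFieldType.
Variable B : completeNormedModType K.
Variable mul : B -> B -> B.
Hypothesis hmul : is_banach_algebra_mul (K:=K) mul.

Let mulA : forall x y z, mul x (mul y z) = mul (mul x y) z.
Proof. by case: hmul. Qed.
Let mulDr : forall x y z, mul x (y + z) = mul x y + mul x z.
Proof. by case: hmul. Qed.
Let mulDl : forall x y z, mul (x + y) z = mul x z + mul y z.
Proof. by case: hmul. Qed.
Let mulZl : forall (a : K) x y, mul (a *: x) y = a *: mul x y.
Proof. by case: hmul => _ _ _ H _ a x y; case: (H a x y). Qed.
Let mulZr : forall (a : K) x y, mul x (a *: y) = a *: mul x y.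
Proof. by case: hmul => _ _ _ H _ a x y; case: (H a x y). Qed.
Let mulN : forall x y, `|mul x y| <= `|x| * `|y|.
Proof. by case: hmul. Qed.

Lemma add_0 {phi : B -> B} : (forall x y, phi (x + y) = phi x + phi y) -> phi 0 = 0.
Proof. move=> H; have e := H 0 0; rewrite addr0 in e. by apply: (addrI (phi 0)); rewrite addr0 -e. Qed.
Lemma add_N {phi : B -> B} : (forall x y, phi (x + y) = phi x + phi y) -> forall x, phi (- x) = - phi x.
Proof. by move=> H x; apply: (addrI (phi x)); rewrite -H !subrr (add_0 H). Qed.
Lemma add_B {phi : B -> B} : (forall x y, phi (x + y) = phi x + phi y) -> forall x y, phi (x - y) = phi x - phi y.
Proof. by move=> H x y; rewrite H (add_N H). Qed.
Lemma add_Mn {phi : B -> B} : (forall x y, phi (x + y) = phi x + phi y) -> forall x n, phi (x *+ n) = phi x *+ n.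
Proof. move=> H x; elim=> [|n IH]; first by rewrite !mulr0n (add_0 H). by rewrite !mulrS H IH. Qed.

Lemma mul0l x : mul 0 x = 0. Proof. exact: (add_0 (phi := fun v => mul v x)). Qed.
Lemma mul0r x : mul x 0 = 0. Proof. exact: (add_0 (phi := mul x)). Qed.
Lemma mulBl x y z : mul (x - y) z = mul x z - mul y z.
Proof. exact: (add_B (phi := fun v => mul v z)). Qed.
Lemma mulBr x y z : mul x (y - z) = mul x y - mul x z.
Proof. exact: (add_B (phi := mul x)). Qed.
Lemma mulMnl x y n : mul (x *+ n) y = mul x y *+ n.
Proof. exact: (add_Mn (phi := fun v => mul v y)). Qed.
Lemma mulMnr x y n : mul x (y *+ n) = mul x y *+ n.
Proof. exact: (add_Mn (phi := mul x)). Qed.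

Notation pw := (bpow mul).
Lemma pw1 x : pw x 1 = x. Proof. by []. Qed.
Lemma pwS x k : pw x k.+2 = mul x (pw x k.+1). Proof. by []. Qed.
Lemma pwSr x k : pw x k.+2 = mul (pw x k.+1) x.
Proof.
elim: k => [//|k IH]; by rewrite [LHS]pwS [in LHS]IH mulA -pwS.
Qed.
Lemma pwS' x k : (0 < k)%N -> pw x k.+1 = mul x (pw x k).
Proof. by case: k. Qed.
Lemma pwD x m n : pw x (m.+1 + n.+1) = mul (pw x m.+1) (pw x n.+1).
Proof.
elim: m => [|m IH]; first by rewrite add1n pwS.
by rewrite addSn pwS' // IH mulA -pwS.
Qed.
Lemma pwM x m n : pw (pw x m.+1) n.+1 = pw x (m.+1 * n.+1).
Proof.
elim: n => [|n IH]; first by rewrite muln1.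
rewrite pwS IH.
have -> : (m.+1 * n.+2 = m.+1 + m.+1 * n.+1)%N by rewrite mulnS.
have [t E] : exists t, (m.+1 * n.+1)%N = t.+1.
  by exists (m.+1*n.+1).-1; rewrite prednK // muln_gt0.
by rewrite E -pwD.
Qed.
Lemma pwZ (a : K) x k : pw (a *: x) k.+1 = a ^+ k.+1 *: pw x k.+1.
Proof.
elim: k => [|k IH]; first by rewrite expr1.
by rewrite pwS IH mulZr mulZl scalerA -exprSr -pwS.
Qed.
Lemma pwMn x s k : pw (x *+ s) k.+1 = pw x k.+1 *+ (s ^ k.+1).
Proof.
elim: k => [|k IH]; first by rewrite expn1.
by rewrite pwS IH mulMnr mulMnl -mulrnA -pwS [in RHS]expnS.
Qed.
Lemma pw_norm x k : `|x| <= 1 -> `|pw x k.+1| <= `|x|.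
Proof.
move=> x1; elim: k => [//|k IH]; rewrite pwS.
apply: (le_trans (mulN _ _)).
have := ler_wpM2l (normr_ge0 x) IH.
move/le_trans; apply.
by rewrite -[leRHS]mulr1; apply: ler_wpM2l.
Qed.


Fixpoint Lower (n : nat) (g : nat -> B) : Prop :=
  if n is n'.+1 then exists c g', Lower n' g' /\ forall s, g s = c *+ (s ^ n') + g' s
  else forall s, g s = 0.
Definition Top n (h : nat -> B) c := exists g, Lower n g /\ forall s, h s = c *+ (s ^ n) + g s.
Definition dlt (h : nat -> B) s := h s.+1 - h s.

Lemma Lower_ext n g g' : (forall s, g s = g' s) -> Lower n g -> Lower n g'.
Proof.
elim: n g g' => [|n IH] g g' E /=; first by move=> H s; rewrite -E H.
by move=> [c [g'' [Hg'' Hg]]]; exists c, g''; split => // s; rewrite -E Hg.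
Qed.
Lemma Lower0f n : Lower n (fun _ => 0).
Proof.
elim: n => [//|n IH] /=; exists 0, (fun _ => 0); split => // s.
by rewrite mul0rn addr0.
Qed.
Lemma Lower_morph (phi : B -> B) : (forall x y, phi (x + y) = phi x + phi y) ->
  forall n g, Lower n g -> Lower n (fun s => phi (g s)).
Proof.
move=> H; elim=> [|n IH] g /=; first by move=> Hg s; rewrite Hg (add_0 H).
move=> [c [g' [Hg' Hg]]]; exists (phi c), (fun s => phi (g' s)); split; first exact: IH.
by move=> s; rewrite Hg H (add_Mn H).
Qed.
Lemma Lower_add n g1 g2 : Lower n g1 -> Lower n g2 -> Lower n (fun s => g1 s + g2 s).
Proof.
elim: n g1 g2 => [|n IH] g1 g2 /=; first by move=> H1 H2 s; rewrite H1 H2 addr0.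
move=> [c1 [h1 [H1 E1]]] [c2 [h2 [H2 E2]]].
exists (c1 + c2), (fun s => h1 s + h2 s); split; first exact: IH.
move=> s; rewrite E1 E2 mulrnDl.
by rewrite [LHS](AC (2*2) (1*3*(2*4))).
Qed.
Lemma Lower_opp n g : Lower n g -> Lower n (fun s => - g s).
Proof. by apply: (@Lower_morph (fun x => - x)) => x y; rewrite opprD. Qed.
Lemma Lower_sub n g1 g2 : Lower n g1 -> Lower n g2 -> Lower n (fun s => g1 s - g2 s).
Proof. by move=> H1 H2; apply: Lower_add => //; apply: Lower_opp. Qed.
Lemma Lower_S n g : Lower n g -> Lower n.+1 g.
Proof. by move=> H; exists 0, g; split => // s; rewrite mul0rn add0r. Qed.
Lemma Lower_le n m g : (n <= m)%N -> Lower n g -> Lower m g.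
Proof.
move=> /subnK <-; elim: (m - n)%N => [//|k IH] H; rewrite addSn.
exact/Lower_S/IH.
Qed.
Lemma Lower_mon c n m : (n < m)%N -> Lower m (fun s => c *+ (s ^ n)).
Proof.
move=> H; apply: (@Lower_le n.+1 m _ H); exists c, (fun _ => 0); split; first exact: Lower0f.
by move=> s; rewrite addr0.
Qed.
Lemma Lower_mulS n g : Lower n g -> Lower n.+1 (fun s => g s *+ s).
Proof.
elim: n g => [|n IH] g /=.
  move=> H; exists 0, (fun _ => 0); split => // s; by rewrite H mul0rn mul0rn addr0.
move=> [c [g' [Hg' E]]]; exists c, (fun s => g' s *+ s); split; first exact: IH.
by move=> s; rewrite E mulrnDl -mulrnA -expnSr.
Qed.
Lemma Lower_sum n (d : nat -> B) : Lower n (fun s => \sum_(i < n) d i *+ (s ^ i)).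
Proof.
elim: n => [|n IH] /=; first by move=> s; rewrite big_ord0.
exists (d n), (fun s => \sum_(i < n) d i *+ (s ^ i)); split => // s.
by rewrite big_ord_recr /= addrC.
Qed.
Lemma binom_diff (c : B) n s :
  c *+ (s.+1 ^ n) - c *+ (s ^ n) = \sum_(i < n) (c *+ 'C(n, i)) *+ (s ^ i).
Proof.
rewrite -add1n expnDn -sumrMnr big_ord_recr /= subnn expn0 binn !mul1n addrK.
by apply: eq_bigr => i _; rewrite exp1n mul1n -mulrnA.
Qed.
Lemma Lower_dlt n g : Lower n.+1 g -> Lower n (dlt g).
Proof.
elim: n g => [|n IH] g.
  move=> [c [g' [Hg' E]]] s; by rewrite /dlt !E !Hg' !expn0 subrr.
move=> [c [g' [Hg' E]]].
apply: (@Lower_ext _ (fun s => (c *+ (s.+1 ^ n.+1) - c *+ (s ^ n.+1)) + dlt g' s)).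
  by move=> s; rewrite /dlt !E opprD addrACA.
apply: Lower_add; last exact/Lower_S/IH.
apply: (@Lower_ext _ (fun s => \sum_(i < n.+1) (c *+ 'C(n.+1, i)) *+ (s ^ i))).
  by move=> s; rewrite binom_diff.
exact: (@Lower_sum n.+1 (fun i => c *+ 'C(n.+1, i))).
Qed.
Lemma Top_Lower n h c : Top n h c -> Lower n.+1 h.
Proof. by move=> [g [Hg E]]; exists c, g. Qed.
Lemma Top_dlt n h c : Top n.+1 h c -> Top n (dlt h) (c *+ n.+1).
Proof.
move=> [g [Hg E]].
exists (fun s => \sum_(i < n) (c *+ 'C(n.+1, i)) *+ (s ^ i) + dlt g s); split.
  by apply: Lower_add; [exact: (@Lower_sum n (fun i => c *+ 'C(n.+1, i))) | exact: Lower_dlt].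
move=> s; rewrite /dlt !E opprD addrACA binom_diff big_ord_recr /= binSn.
by rewrite [RHS]addrCA [RHS]addrA.
Qed.
Lemma Top0 h c : Top 0 h c -> forall s, h s = c.
Proof. by move=> [g [Hg E]] s; rewrite E Hg expn0 addr0. Qed.
Lemma Top_iter n : forall h c, Top n h c -> iter n dlt h 0 = c *+ n`!.
Proof.
elim: n => [|n IH] h c H; first by rewrite /= (Top0 H).
by rewrite iterSr (IH _ _ (Top_dlt H)) -mulrnA factS mulnC.
Qed.
Definition subclosed (V : B -> Prop) := forall x y, V x -> V y -> V (x - y).
Lemma V_iter V : subclosed V -> forall n h N,
  (forall s, (s <= N + n)%N -> V (h s)) -> forall s, (s <= N)%N -> V (iter n dlt h s).
Proof.
move=> HV; elim=> [|n IH] h N H s Hs; first by apply: H; rewrite addn0.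
rewrite iterSr; apply: (IH (dlt h) N) => // t Ht.
by apply: HV; apply: H; rewrite addnS // leqW.
Qed.
Lemma Top_V V : subclosed V -> forall n h c, Top n h c ->
  (forall s, (s <= n)%N -> V (h s)) -> V (c *+ n`!).
Proof.
move=> HV n h c HT H; rewrite -(Top_iter HT).
by apply: (V_iter HV (N := 0)) => // s; rewrite add0n; apply: H.
Qed.
Lemma Top_add n h1 h2 c1 c2 : Top n h1 c1 -> Top n h2 c2 -> Top n (fun s => h1 s + h2 s) (c1 + c2).
Proof.
move=> [g1 [H1 E1]] [g2 [H2 E2]]; exists (fun s => g1 s + g2 s); split; first exact: Lower_add.
by move=> s; rewrite E1 E2 mulrnDl addrACA.
Qed.
Lemma Top_morph (phi : B -> B) : (forall x y, phi (x + y) = phi x + phi y) ->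
  forall n h c, Top n h c -> Top n (fun s => phi (h s)) (phi c).
Proof.
move=> H n h c [g [Hg E]]; exists (fun s => phi (g s)); split; first exact: Lower_morph.
by move=> s; rewrite E H (add_Mn H).
Qed.
Lemma Top_sub n h1 h2 c1 c2 : Top n h1 c1 -> Top n h2 c2 -> Top n (fun s => h1 s - h2 s) (c1 - c2).
Proof.
move=> H1 H2; apply: Top_add => //.
by apply: (@Top_morph (fun x => - x)) => // x y; rewrite opprD.
Qed.

Definition subsp (V : B -> Prop) := subclosed V /\ forall (a : K) x, V x -> V (a *: x).
Lemma subsp_Mn V : subsp V -> forall c n, (0 < n)%N -> V (c *+ n) -> V c.
Proof.
move=> [_ HZ] c n n0 Hc; have := HZ (n%:R)^-1 _ Hc.
by rewrite -[c *+ n]scaler_nat scalerA mulVf ?scale1r // pnatr_eq0 -lt0n.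
Qed.
Lemma Top_Vc V : subsp V -> forall n h c, Top n h c ->
  (forall s, (s <= n)%N -> V (h s)) -> V c.
Proof.
move=> HV n h c HT H; apply: (subsp_Mn HV (fact_gt0 n)).
exact: (Top_V HV.1 HT H).
Qed.

Fixpoint sec' (y u : B) (k : nat) : B :=
  if k is k'.+1 then mul u (pw y k'.+1) + mul y (sec' y u k') else u.
Definition sec y u k := if k is k'.+1 then sec' y u k' else 0.
Lemma secS y u k : sec y u k.+2 = mul u (pw y k.+1) + mul y (sec y u k.+1).
Proof. by []. Qed.

Lemma pw_expand y u k : exists g, Lower k g /\ forall s,
  pw (u + y *+ s) k.+1 = pw y k.+1 *+ (s ^ k.+1) + sec y u k.+1 *+ (s ^ k) + g s.
Proof.
elim: k => [|k [g [Hg E]]].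
  exists (fun _ => 0); split => // s.
  by rewrite pw1 expn1 expn0 mulr1n addr0 addrC.
exists (fun s => mul u (sec y u k.+1) *+ (s ^ k) + mul u (g s) + mul y (g s) *+ s); split.
  apply: Lower_add; last exact/Lower_mulS/(Lower_morph (mulDr y)).
  apply: Lower_add; first exact: Lower_mon.
  exact/Lower_S/(Lower_morph (mulDr u)).
move=> s; rewrite pwS E secS pwS mulDl !mulDr !mulMnr !mulMnl -!mulrnA -!expnS mulrnDl.
by rewrite [LHS](AC (3*3) (4*1*5*2*3*6)) [RHS](AC (1*2*3) (1*2*3*4*5*6)).
Qed.
Lemma Top_pow y u k : Top k.+1 (fun s => pw (u + y *+ s) k.+1) (pw y k.+1).
Proof.
have [g [Hg E]] := pw_expand y u k.
exists (fun s => sec y u k.+1 *+ (s ^ k) + g s); split; first by exists (sec y u k.+1), g.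
by move=> s; rewrite E addrA.
Qed.
Lemma Top_sec y u k :
  Top k (fun s => pw (u + y *+ s) k.+1 - pw (y *+ s) k.+1) (sec y u k.+1).
Proof.
have [g [Hg E]] := pw_expand y u k.
exists g; split => // s; apply/eqP; by rewrite E pwMn subr_eq [X in _ == X](ACl (3*1*2)).
Qed.

Definition comm x y := mul x y - mul y x.
Lemma center_subsp : subsp (Defs.center mul).
Proof.
split.
  by move=> x y Hx Hy z; rewrite mulBl mulBr Hx Hy.
by move=> a x Hx z; rewrite mulZl mulZr Hx.
Qed.
Lemma comm_subsp w : subsp (fun v => mul v w = mul w v).
Proof.
split; first by move=> x y Hx Hy; rewrite mulBl mulBr Hx Hy.
by move=> a x Hx; rewrite mulZl mulZr Hx.
Qed.
Lemma zero_subsp : subsp (fun v => v = 0).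
Proof. split; first by move=> x y -> ->; rewrite subr0. by move=> a x ->; rewrite scaler0. Qed.

Hypothesis hprime : prime_alg mul.

Lemma central_mul_zero c r : Defs.center mul c -> mul c r = 0 -> c = 0 \/ r = 0.
Proof. by move=> Hc H; apply: hprime => z; rewrite Hc -mulA H mul0r. Qed.

Lemma comm0 x y : comm x y = 0 -> mul x y = mul y x.
Proof. by move/eqP; rewrite subr_eq0 => /eqP. Qed.

Lemma commMl x w : comm (mul x x) w = mul x (comm x w) + mul (comm x w) x.
Proof.
rewrite /comm mulBr mulBl !mulA -[mul (mul x w) x]mulA -[mul (mul w x) x]mulA.
by rewrite addrA subrK.
Qed.

Lemma stepE k : (forall x y, Defs.center mul (comm (pw x k.+1) (pw y k.+1))) ->
  forall x y, comm (pw x k.+1) (pw y k.+1) = 0.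
Proof.
move=> HZ x y; set X := pw x k.+1; set W := pw y k.+1.
have Hc : Defs.center mul (comm X W) by apply: HZ.
have e2 : pw (pw x 2) k.+1 = mul X X.
  by rewrite pwM -pwD mul2n -addnn.
have Hc2 : Defs.center mul (mul (comm X W) X).
  have := HZ (pw x 2) y; rewrite e2 commMl Hc -mulr2n.
  by apply: (subsp_Mn center_subsp).
have H0 : forall z, mul (comm X W) (comm X z) = 0.
  move=> z; rewrite /comm [in mul _ (_ - _)]mulBr mulA Hc2 mulA -Hc mulA.
  by rewrite subrr.
by have [|] := central_mul_zero Hc (H0 W).
Qed.

Lemma sec_comm y u k : sec y (comm u y) k.+1 = comm u (pw y k.+1).
Proof.
elim: k => [//|k IH]; rewrite secS IH /comm mulBl mulBr.
rewrite -[mul (mul u y) _]mulA -[mul (mul y u) _]mulA [mul y (mul (pw y _) u)]mulA -!pwS.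
by rewrite addrA subrK.
Qed.

Lemma commD x y w : comm (x + y) w = comm x w + comm y w.
Proof. by rewrite /comm mulDl mulDr opprD addrACA. Qed.
Lemma commM x y w : comm (mul x y) w = mul x (comm y w) + mul (comm x w) y.
Proof.
by rewrite /comm mulBr mulBl !mulA addrA subrK.
Qed.

Lemma stepF k : (forall x y, comm (pw x k.+1) (pw y k.+1) = 0) ->
  forall y, Defs.center mul (pw y k.+1).
Proof.
move=> Hc y; set Y := pw y k.+1.
have HV : forall u, mul (sec y u k.+1) Y = mul Y (sec y u k.+1).
  move=> u; apply: (Top_Vc (comm_subsp Y) (Top_sec y u k)) => s _.
  by apply: (comm_subsp Y).1; apply: comm0; apply: Hc.
have dd : forall v, comm (comm v Y) Y = 0.
  by move=> v; rewrite -(sec_comm y v k) /comm HV subrr.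
have dM : forall v w, mul (comm v Y) (comm w Y) = 0.
  move=> v w; have := dd (mul v w); rewrite commM commD !commM dd dd.
  rewrite mul0r mul0l add0r addr0 -mulr2n => H.
  by apply: (subsp_Mn zero_subsp (n := 2)).
have dz : forall v, comm v Y = 0.
  move=> v; have : forall z, mul (mul (comm v Y) z) (comm v Y) = 0.
    move=> z; have := dM v (mul z v); rewrite commM mulDr.
    by rewrite !mulA dM mul0l addr0.
  by move/hprime => [].
by move=> z; apply/esym/comm0/dz.
Qed.

Lemma center_pw c n : Defs.center mul c -> Defs.center mul (pw c n.+1).
Proof.
move=> Hc; elim: n => [//|n IH] z.
by rewrite pwS -mulA IH mulA Hc -mulA.
Qed.
Lemma pw_nz c n : Defs.center mul c -> c != 0 -> pw c n.+1 != 0.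
Proof.
move=> Hc c0; elim: n => [//|n IH]; rewrite pwS.
apply/eqP => H; have [] := central_mul_zero Hc H; by apply/eqP.
Qed.
Lemma sec_central c y j : Defs.center mul c -> sec c y j.+2 = mul (pw c j.+1) y *+ j.+2.
Proof.
move=> Hc; elim: j => [|j IH]; first by rewrite secS /= Hc mulr2n.
by rewrite secS IH mulMnr mulA -pwS center_pw // mulrS.
Qed.

Lemma nil_down j : (forall x, pw x j.+2 = 0) -> forall x, pw x j.+1 = 0.
Proof.
move=> H y.
have Hs : forall u, sec y u j.+2 = 0.
  move=> u; apply: (Top_Vc zero_subsp (Top_sec y u j.+1)) => s _.
  by rewrite !H subr0.
have : forall u, mul (mul (pw y j.+1) u) (pw y j.+1) = 0.
  move=> u; have := Hs u; rewrite secS => E.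
  have := congr1 (mul (pw y j.+1)) E.
  by rewrite mulDr mul0r [mul (pw y j.+1) (mul y _)]mulA -pwSr H mul0l addr0 mulA.
by move/hprime => [].
Qed.
Lemma nil_all n : (forall x, pw x n.+1 = 0) -> forall x : B, x = 0.
Proof.
elim: n => [|n IH] H x; first by have := H x.
by apply: IH; apply: nil_down.
Qed.

Lemma stepG k : (forall y, Defs.center mul (pw y k.+1)) -> commutative_alg mul.
Proof.
move=> Hcen; case: k Hcen => [|k] Hcen.
  by move=> x y; apply: (Hcen x).
have [[x xnz]|allz] := pselect (exists x, pw x k.+2 != 0); last first.
  have H0 : forall x, pw x k.+2 = 0.
    by move=> x; apply/eqP/negPn/negP => nz; apply: allz; exists x.
  by move=> x y; rewrite (nil_all H0 x) (nil_all H0 y).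
set c := pw x k.+2; have Hc : Defs.center mul c by apply: Hcen.
set d := pw c k.+1.
have Hd : Defs.center mul d by apply: center_pw.
have dnz : d != 0 by apply: pw_nz.
have Hdy : forall y, Defs.center mul (mul d y).
  move=> y; apply: (subsp_Mn center_subsp (n := k.+2)) => //.
  rewrite -sec_central //.
  apply: (Top_Vc center_subsp (Top_sec c y k.+1)) => s _.
  by apply: center_subsp.1; apply: Hcen.
move=> y z; have : mul d (comm y z) = 0.
  by rewrite /comm mulBr !mulA (Hdy y z) mulA -(Hd z) subrr.
move/(central_mul_zero Hd) => [d0|]; first by move/eqP: dnz.
exact: comm0.
Qed.

Theorem core k : (forall x y, Defs.center mul (comm (pw x k.+1) (pw y k.+1))) -> commutative_alg mul.
Proof. by move=> H; apply: (stepG (k:=k)); apply: stepF; apply: stepE. Qed.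

Variable f : B -> B.
Hypothesis hf : is_automorphism mul f.
Let fD : forall x y, f (x + y) = f x + f y. Proof. by case: hf. Qed.
Let fM : forall x y, f (mul x y) = mul (f x) (f y). Proof. by case: hf. Qed.
Let finj : injective f. Proof. by case: hf => /bij_inj. Qed.

Lemma Zf w : Defs.center mul (f w) -> Defs.center mul w.
Proof.
move=> H z; have [g fg gf] : bijective f by case: hf.
apply: finj; by rewrite !fM -(gf z) H.
Qed.

Definition GG p q x y := f (mul (pw x p) (pw y q)) - jordan mul (pw x p) (pw y q).

Variables (p' q' : nat) (x0 y0 : B) (r : K).
Hypothesis r0 : 0 < r.
Hypothesis hloc : forall x y, `|x0 - x| < r -> `|y0 - y| < r ->
  Defs.center mul (GG p'.+1 q'.+1 x y).

Lemma norm_step (z a : B) s n : `|a| * n%:R < r -> (s <= n)%N -> `|z - (z + a *+ s)| < r.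
Proof.
move=> H sn; rewrite opprD addrA subrr add0r normrN normrMn.
apply: le_lt_trans H; rewrite -[`|a| *+ s]mulr_natr; apply: ler_wpM2l => //; by rewrite ler_nat.
Qed.

Lemma homx a y : `|a| * p'.+1%:R < r -> `|y0 - y| < r ->
  Defs.center mul (GG p'.+1 q'.+1 a y).
Proof.
move=> ha hy; set Q := pw y q'.+1.
have T1 := Top_pow a x0 p'.
have Tf := Top_morph (phi := fun v => f (mul v Q)) (fun u v => etrans (congr1 f (mulDl u v Q)) (fD _ _)) T1.
have Tl := Top_morph (phi := fun v => mul v Q) (fun u v => mulDl u v Q) T1.
have Tr := Top_morph (phi := fun v => mul Q v) (fun u v => mulDr Q u v) T1.
have T := Top_sub Tf (Top_add Tl Tr).
apply: (Top_Vc center_subsp T) => s sp.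
exact: (hloc (norm_step x0 ha sp) hy).
Qed.

Lemma homy a b : `|a| * p'.+1%:R < r -> `|b| * q'.+1%:R < r ->
  Defs.center mul (GG p'.+1 q'.+1 a b).
Proof.
move=> ha hb; set P := pw a p'.+1.
have T1 := Top_pow b y0 q'.
have Tf := Top_morph (phi := fun v => f (mul P v)) (fun u v => etrans (congr1 f (mulDr P u v)) (fD _ _)) T1.
have Tl := Top_morph (phi := fun v => mul P v) (fun u v => mulDr P u v) T1.
have Tr := Top_morph (phi := fun v => mul v P) (fun u v => mulDl u v P) T1.
have T := Top_sub Tf (Top_add Tl Tr).
apply: (Top_Vc center_subsp T) => s sq.
exact: (homx ha (norm_step y0 hb sq)).
Qed.

Let N : K := (p'.+1 + q'.+1)%:R.
Definition small (a : B) := `|a| <= 1 /\ `|a| * N < r.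

Lemma small_p a : small a -> `|a| * p'.+1%:R < r.
Proof. move=> [_ H]; apply: le_lt_trans H; apply: ler_wpM2l => //; by rewrite ler_nat leq_addr. Qed.
Lemma small_q a : small a -> `|a| * q'.+1%:R < r.
Proof. move=> [_ H]; apply: le_lt_trans H; apply: ler_wpM2l => //; by rewrite ler_nat leq_addl. Qed.
Lemma small_pw a k : small a -> small (pw a k.+1).
Proof.
move=> [H1 H2]; have := pw_norm k H1 => Hn; split; first exact: le_trans Hn H1.
apply: le_lt_trans H2; apply: ler_wpM2r => //; by rewrite /N ler0n.
Qed.

Lemma jordan_cancel (x y u v : B) : (x - (u + v)) - (y - (v + u)) = x - y.
Proof. by rewrite [v + u]addrC opprB addrA subrK. Qed.

Lemma stepC a e : small a -> small e ->
  Defs.center mul (comm (pw a (q'.+1 * p'.+1)) (pw e (q'.+1 * p'.+1))).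
Proof.
move=> ha he.
have H1 := homy (small_p (small_pw q' ha)) (small_q (small_pw p' he)).
have H2 := homy (small_p (small_pw q' he)) (small_q (small_pw p' ha)).
have := center_subsp.1 _ _ H1 H2.
rewrite /GG /jordan !pwM [(p'.+1 * q'.+1)%N]mulnC jordan_cancel -(add_B fD).
exact: Zf.
Qed.

Lemma scale_small a : exists l : K, l != 0 /\ small (l *: a).
Proof.
have N0 : 0 < N by rewrite /N ltr0n addn_gt0.
have Nr : 0 < N + r by rewrite addr_gt0.
have a1 : 0 < `|a| + 1 by rewrite ltr_wpDl.
set t := r / (N + r).
have t0 : 0 < t by rewrite divr_gt0.
exists (t / (`|a| + 1)); split; first by rewrite mulf_neq0 ?invr_eq0 // gt_eqF.
have Hle : `|t / (`|a| + 1) *: a| <= t.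
  rewrite normrZ ger0_norm; last by rewrite divr_ge0 // ltW.
  rewrite mulrAC ler_pdivrMr //.
  by apply: ler_wpM2l; [exact: ltW | rewrite lerDl].
split.
  apply: le_trans Hle _; by rewrite /t ler_pdivrMr // mul1r lerDr ltW.
apply: le_lt_trans (ler_wpM2r (ltW N0) Hle) _.
by rewrite /t mulrAC ltr_pdivrMr // ltr_pM2l // ltrDl.
Qed.

Lemma comm_scale (a b : K) x y : comm (a *: x) (b *: y) = (a * b) *: comm x y.
Proof. by rewrite /comm mulZl mulZr mulZr mulZl !scalerA scalerBr. Qed.

Lemma stepD : forall x y,
  Defs.center mul (comm (pw x (q'.+1 * p'.+1)) (pw y (q'.+1 * p'.+1))).
Proof.
move=> x y.
have [l [l0 hl]] := scale_small x.
have [u [u0 hu]] := scale_small y.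
have := stepC hl hu.
have [k ->] : exists k, (q'.+1 * p'.+1 = k.+1)%N.
  by exists (q'.+1 * p'.+1).-1; rewrite prednK // muln_gt0.
rewrite !pwZ comm_scale => H.
have := center_subsp.2 (l ^+ k.+1 * u ^+ k.+1)^-1 _ H.
by rewrite scalerA mulVf ?scale1r // mulf_neq0 // expf_neq0.
Qed.

Theorem local_comm : commutative_alg mul.
Proof.
have [k E] : exists k, (q'.+1 * p'.+1 = k.+1)%N.
  by exists (q'.+1 * p'.+1).-1; rewrite prednK // muln_gt0.
apply: (core (k := k)) => x y; rewrite -E; exact: stepD.
Qed.

End Alg.

Section T.
Variable K : numFieldType.
Variable B : completeNormedModType K.

Lemma cont_eps (f : B -> B) : continuous f -> forall x (e : K), 0 < e ->
  exists d : K, 0 < d /\ forall w, `|x - w| < d -> `|f x - f w| < e.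
Proof.
move=> hfc x e e0.
have H0 : \forall t \near x, `|f x - f t| < e by apply: cvgr_dist_lt => //; exact: hfc.
have [d d0 H] := iffLR (nbhs_ballP _ _) H0; exists d; split => // w xw.
apply: H; by rewrite -ball_normE /=.
Qed.

Lemma open_eps (O : set B) x : open O -> O x -> exists d : K, 0 < d /\ forall w, `|x - w| < d -> O w.
Proof.
move=> oO Ox; have H0 : nbhs x O by apply: open_nbhs_nbhs; split.
have [d d0 H] := iffLR (nbhs_ballP _ _) H0; exists d; split => // w xw.
apply: H; by rewrite -ball_normE /=.
Qed.

Lemma seq_lim (a : nat -> B) : cvg (a @ \oo) -> exists l, forall e : K, 0 < e -> forall n, exists m, (n <= m)%N /\ `|l - a m| < e.
Proof.
move=> H; exists (lim (a @ \oo)) => e e0 n.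
have [N _ HN] : \forall m \near \oo, `|lim (a @ \oo) - a m| < e by apply: cvgr_dist_lt.
exists (maxn N n); split; first exact: leq_maxr.
apply: HN; rewrite /= leq_maxl //.
Qed.

Lemma cauchy_seq (a : nat -> B) (rr : nat -> K) :
  (forall n m, (n <= m)%N -> `|a n - a m| <= rr n) ->
  (forall e, 0 < e -> exists n, rr n < e) -> cvg (a @ \oo).
Proof.
move=> Hn Hr; apply: cauchy_cvg; apply: cauchy_exP => e e0.
have [n rn] := Hr e e0; exists (a n).
exists n => // m nm /=; rewrite -ball_normE /=.
exact: le_lt_trans (Hn n m nm) rn.
Qed.
End T.

Section JC.
Variable K : numFieldType.
Variable B : completeNormedModType K.

Lemma pmin (d1 d2 : K) : 0 < d1 -> 0 < d2 -> exists d, [/\ 0 < d, d <= d1 & d <= d2].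
Proof.
move=> h1 h2; have h12 : 0 < d1 + d2 by rewrite addr_gt0.
exists (d1 * d2 / (d1 + d2)); split.
- by rewrite divr_gt0 // mulr_gt0.
- by rewrite ler_pdivrMr // ler_pM2l // lerDr ltW.
- by rewrite ler_pdivrMr // [d1 * d2]mulrC ler_pM2l // lerDl ltW.
Qed.

Definition jc (g : B -> B -> B) x y := forall e : K, 0 < e -> exists d : K, 0 < d /\
  forall x' y', `|x - x'| < d -> `|y - y'| < d -> `|g x y - g x' y'| < e.

Lemma jc_fst x y : jc (fun a _ => a) x y.
Proof. by move=> e e0; exists e; split. Qed.
Lemma jc_snd x y : jc (fun _ b => b) x y.
Proof. by move=> e e0; exists e; split. Qed.
Lemma jc_const c x y : jc (fun _ _ => c) x y.
Proof. by move=> e e0; exists 1; split => // *; rewrite subrr normr0. Qed.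
Lemma jc_add g1 g2 x y : jc g1 x y -> jc g2 x y -> jc (fun a b => g1 a b + g2 a b) x y.
Proof.
move=> h1 h2 e e0; have e2 : 0 < e / 2%:R by rewrite divr_gt0.
have [d1 [d10 H1]] := h1 _ e2; have [d2 [d20 H2]] := h2 _ e2.
have [d [d0 dd1 dd2]] := pmin d10 d20; exists d; split => // x' y' hx hy.
rewrite opprD addrACA (splitr e); apply: le_lt_trans (ler_normD _ _) _.
apply: ltrD; [apply: H1|apply: H2]; first [exact: lt_le_trans hx dd1 | exact: lt_le_trans hy dd1 | exact: lt_le_trans hx dd2 | exact: lt_le_trans hy dd2].
Qed.
Lemma jc_opp g x y : jc g x y -> jc (fun a b => - g a b) x y.
Proof.
move=> h e e0; have [d [d0 H]] := h _ e0; exists d; split => // x' y' hx hy.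
by rewrite -opprD normrN; apply: H.
Qed.

Variable mul : B -> B -> B.
Hypothesis hmul : is_banach_algebra_mul (K:=K) mul.

Lemma jc_mul g1 g2 x y : jc g1 x y -> jc g2 x y -> jc (fun a b => mul (g1 a b) (g2 a b)) x y.
Proof.
move=> h1 h2 e e0.
set A := `|g1 x y|; set C := `|g2 x y|.
set M := A + C + 1.
have M0 : 0 < M by rewrite /M; apply: ltr_pwDr; [exact: ltr01 | apply: addr_ge0; exact: normr_ge0].

have eM : 0 < e + M by rewrite addr_gt0.
set eta := e / (e + M).
have eta0 : 0 < eta by rewrite divr_gt0.
have eta1 : eta <= 1 by rewrite ler_pdivrMr // mul1r lerDl ltW.
have etaM : eta * M < e by rewrite /eta mulrAC ltr_pdivrMr // ltr_pM2l // ltrDr.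
have [d1 [d10 H1]] := h1 _ eta0; have [d2 [d20 H2]] := h2 _ eta0.
have [d [d0 dd1 dd2]] := pmin d10 d20; exists d; split => // x' y' hx hy.
have k1 := H1 x' y' (lt_le_trans hx dd1) (lt_le_trans hy dd1).
have k2 := H2 x' y' (lt_le_trans hx dd2) (lt_le_trans hy dd2).
set u := g1 x y; set u' := g1 x' y'; set v := g2 x y; set v' := g2 x' y'.
have -> : mul u v - mul u' v' = mul (u - u') v + mul u' (v - v').
  by rewrite (mulBl hmul) (mulBr hmul) addrA subrK.
have nu' : `|u'| <= A + eta.
  have -> : u' = u - (u - u') by rewrite opprB addrC subrK.
  apply: le_trans (ler_normB _ _) _; exact: lerD (ltW k1).
apply: le_lt_trans (ler_normD _ _) _.
apply: le_lt_trans etaM.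
have mN : forall a b, `|mul a b| <= `|a| * `|b| by case: hmul.
apply: le_trans (lerD (mN _ _) (mN _ _)) _.
have -> : eta * M = eta * C + (A + 1) * eta by rewrite /M; ring.
apply: lerD; first by apply: ler_wpM2r => //; exact: ltW.
apply: ler_pM => //; last exact: ltW.
by apply: le_trans nu' _; rewrite lerD2l.
Qed.

Lemma jc_pw g x y k : jc g x y -> jc (fun a b => bpow mul (g a b) k.+1) x y.
Proof.
move=> h; elim: k => [//|k IH].
exact: (jc_mul h IH).
Qed.

Lemma jc_comp (f : B -> B) g x y : continuous f -> jc g x y -> jc (fun a b => f (g a b)) x y.
Proof.
move=> hf h e e0.
have [d0 [d00 H0]] := cont_eps hf (g x y) e0.
have [d [dd H]] := h _ d00; exists d; split => // x' y' hx hy.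
by apply: H0; apply: H.
Qed.

Lemma jc_nz g x y : jc g x y -> g x y != 0 -> exists d : K, 0 < d /\
  forall x' y', `|x - x'| < d -> `|y - y'| < d -> g x' y' != 0.
Proof.
move=> h nz; have g0 : 0 < `|g x y| by rewrite normr_gt0.
have [d [d0 H]] := h _ g0.
exists d; split => // x' y' hx hy; apply/eqP => E.
by have := H _ _ hx hy; rewrite E subr0 ltxx.
Qed.

Lemma GG_closed (f : B -> B) (hfc : continuous f) p q x y :
  ~ Defs.center mul (GG mul f p.+1 q.+1 x y) -> exists rho : K, 0 < rho /\
  forall x' y', `|x - x'| < rho -> `|y - y'| < rho -> ~ Defs.center mul (GG mul f p.+1 q.+1 x' y').
Proof.
move=> /existsNP [z Hz].
pose phi a b := mul (GG mul f p.+1 q.+1 a b) z + - mul z (GG mul f p.+1 q.+1 a b).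
have jG : forall a b, jc (fun a b => GG mul f p.+1 q.+1 a b) a b.
  move=> a b; rewrite /GG /jordan.
  apply: jc_add.
    apply: jc_comp hfc _; apply: jc_mul; exact: jc_pw (jc_fst _ _) || exact: jc_pw (jc_snd _ _).
  apply: jc_opp; apply: jc_add; apply: jc_mul;
    (exact: jc_pw (jc_fst _ _) || exact: jc_pw (jc_snd _ _)).
have jp : jc phi x y.
  apply: jc_add; first exact: jc_mul (jG x y) (jc_const _ _ _).
  by apply: jc_opp; apply: jc_mul (jc_const _ _ _) (jG x y).
have nz : phi x y != 0 by rewrite /phi subr_eq0; apply/eqP.
have [d [d0 H]] := jc_nz jp nz; exists d; split => // x' y' hx hy Hc.
by have := H _ _ hx hy; rewrite /phi Hc subrr eqxx.
Qed.
End JC.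

Section Baire2.
Variable K : numFieldType.
Variable B : completeNormedModType K.
Hypothesis archi : forall e : K, 0 < e -> exists n : nat, (n.+1%:R)^-1 < e.

Lemma baire2 (C : nat -> B -> B -> Prop)
  (Ccl : forall n x y, ~ C n x y -> exists rho : K, 0 < rho /\
     forall x' y', `|x - x'| < rho -> `|y - y'| < rho -> ~ C n x' y')
  (a0 b0 : B) (r0 : K) : 0 < r0 ->
  (forall x y, `|a0 - x| < r0 -> `|b0 - y| < r0 -> exists n, C n x y) ->
  exists n x1 y1 (r : K), 0 < r /\
     forall x y, `|x1 - x| < r -> `|y1 - y| < r -> C n x y.
Proof.
move=> r00 cover.
case: (pselect (exists n x1 y1 (r : K), 0 < r /\
     forall x y, `|x1 - x| < r -> `|y1 - y| < r -> C n x y)) => // Hno.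
exfalso.
have H : forall n x1 y1 (r : K), 0 < r -> exists x y,
    [/\ `|x1 - x| < r, `|y1 - y| < r & ~ C n x y].
  move=> n x1 y1 r r0'.
  case: (pselect (exists x y, [/\ `|x1 - x| < r, `|y1 - y| < r & ~ C n x y])) => // Hn.
  exfalso; apply: Hno; exists n, x1, y1, r; split => // x y hx hy.
  case: (pselect (C n x y)) => // nC; exfalso; apply: Hn; by exists x, y; split.
have step : forall t : nat * (B * B * K), exists t' : B * B * K, 0 < t.2.2 ->
    [/\ 0 < t'.2, t'.2 <= (t.1.+1%:R)^-1, `|t.2.1.1 - t'.1.1| + t'.2 <= t.2.2,
        `|t.2.1.2 - t'.1.2| + t'.2 <= t.2.2 &
        forall x y, `|t'.1.1 - x| < t'.2 + t'.2 -> `|t'.1.2 - y| < t'.2 + t'.2 -> ~ C t.1 x y].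
  move=> [n [[a b] r]] /=.
  case: (pselect (0 < r)) => r0'; last by exists (a, b, r).
  have r2 : 0 < r / 2%:R by rewrite divr_gt0.
  have [x [y [hx hy nC]]] := H n a b _ r2.
  have [rho [rho0 Hrho]] := Ccl _ _ _ nC.
  have rho2 : 0 < rho / 2%:R by rewrite divr_gt0.
  have [d1 [d10 d1r d1s]] := pmin rho2 r2.
  have n1 : 0 < (n.+1%:R : K)^-1 by rewrite invr_gt0.
  have [d [d0 dd1 dn]] := pmin d10 n1.
  exists (x, y, d) => _ /=; split => //.
  - apply: ltW; rewrite [X in _ < X](splitr r); apply: ltr_leD => //.
    exact: le_trans dd1 d1s.
  - apply: ltW; rewrite [X in _ < X](splitr r); apply: ltr_leD => //.
    exact: le_trans dd1 d1s.
  - move=> x' y' hx' hy'; apply: Hrho.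
      apply: lt_le_trans hx' _; rewrite [X in _ <= X](splitr rho).
      by apply: lerD; apply: le_trans dd1 d1r.
    apply: lt_le_trans hy' _; rewrite [X in _ <= X](splitr rho).
    by apply: lerD; apply: le_trans dd1 d1r.
have [F HF] := choice step.
pose fix sq n := if n is k.+1 then F (k, sq k) else (a0, b0, r0 / 2%:R).
pose a n := (sq n).1.1; pose b n := (sq n).1.2; pose rr n := (sq n).2.
have pos : forall n, 0 < rr n.
  elim=> [|n IH]; first by rewrite /rr /= divr_gt0.
  by have [] := HF (n, sq n) IH.
have HS : forall n, [/\ 0 < rr n.+1, rr n.+1 <= (n.+1%:R)^-1,
        `|a n - a n.+1| + rr n.+1 <= rr n, `|b n - b n.+1| + rr n.+1 <= rr n &
        forall x y, `|a n.+1 - x| < rr n.+1 + rr n.+1 -> `|b n.+1 - y| < rr n.+1 + rr n.+1 -> ~ C n x y].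
  by move=> n; apply: (HF (n, sq n)); apply: pos.
have nestA : forall n k, `|a n - a (n + k)%N| + rr (n + k)%N <= rr n.
  move=> n; elim=> [|k IH]; first by rewrite addn0 subrr normr0 add0r.
  have [_ _ h _ _] := HS (n + k)%N; rewrite addnS.
  apply: le_trans IH; apply: le_trans (lerD (ler_distD (a (n + k)%N) _ _) (lexx _)) _.
  by rewrite -addrA lerD2l.
have nestB : forall n k, `|b n - b (n + k)%N| + rr (n + k)%N <= rr n.
  move=> n; elim=> [|k IH]; first by rewrite addn0 subrr normr0 add0r.
  have [_ _ _ h _] := HS (n + k)%N; rewrite addnS.
  apply: le_trans IH; apply: le_trans (lerD (ler_distD (b (n + k)%N) _ _) (lexx _)) _.
  by rewrite -addrA lerD2l.
have boundA : forall n m, (n <= m)%N -> `|a n - a m| <= rr n.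
  move=> n m /subnKC <-; apply: le_trans (nestA n (m - n)%N).
  by rewrite lerDl ltW.
have boundB : forall n m, (n <= m)%N -> `|b n - b m| <= rr n.
  move=> n m /subnKC <-; apply: le_trans (nestB n (m - n)%N).
  by rewrite lerDl ltW.
have rr0 : forall e, 0 < e -> exists n, rr n < e.
  move=> e e0; have [k hk] := archi e0; exists k.+1.
  by have [_ h _ _ _] := HS k; apply: le_lt_trans h hk.
have [la Hla] := seq_lim (cauchy_seq boundA rr0).
have [lb Hlb] := seq_lim (cauchy_seq boundB rr0).
have closeA : forall n, `|a n - la| < rr n + rr n.
  move=> n; have [m [nm hm]] := Hla _ (pos n) n.
  apply: le_lt_trans (ler_distD (a m) _ _) _.
  by apply: ler_ltD; [exact: boundA | rewrite distrC].
have closeB : forall n, `|b n - lb| < rr n + rr n.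
  move=> n; have [m [nm hm]] := Hlb _ (pos n) n.
  apply: le_lt_trans (ler_distD (b m) _ _) _.
  by apply: ler_ltD; [exact: boundB | rewrite distrC].
have [n Cn] : exists n, C n la lb.
  apply: cover.
    by have := closeA 0%N; rewrite /rr /a /= -splitr.
  by have := closeB 0%N; rewrite /rr /b /= -splitr.
have [_ _ _ _ h] := HS n.
exact: h (closeA n.+1) (closeB n.+1) Cn.
Qed.
End Baire2.

Lemma archi_real (R : realType) : forall e : R, 0 < e -> exists n : nat, (n.+1%:R)^-1 < e.
Proof.
move=> e e0; exists (Num.truncn e^-1).
by rewrite -ltf_pV2 ?(posrE,divr_gt0) ?invrK ?truncnS_gt // invr_gt0.
Qed.

Lemma archi_cplx (R : realType) : forall e : R[i], 0 < e -> exists n : nat, (n.+1%:R)^-1 < e.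
Proof.
move=> [a b]; rewrite ltcE /= => /andP [/eqP b0 a0].
have [n hn] := archi_real a0; exists n.
have E : (n.+1%:R : R[i])^-1 = ((n.+1%:R : R)^-1)%:C by rewrite fmorphV rmorph_nat.
by rewrite E ltcE /= b0 eqxx hn.
Qed.

Lemma main_over (K : numFieldType) :
  (forall e : K, 0 < e -> exists n : nat, (n.+1%:R)^-1 < e) -> theorem2p4_over K.
Proof.
move=> archi B mul hmul hprime H1 H2 oH1 [x1 Hx1] oH2 [y1 Hy1] f hf hfc hyp.
have [d1 [d10 Hd1]] := open_eps oH1 Hx1.
have [d2 [d20 Hd2]] := open_eps oH2 Hy1.
have [r0 [r00 r01 r02]] := pmin d10 d20.
pose e := fun n : nat => odflt (0%N, 0%N) (@unpickle (prod nat nat) n).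
pose C := fun n x y => Defs.center mul (GG mul f (e n).1.+1 (e n).2.+1 x y).
have Ccl : forall n x y, ~ C n x y -> exists rho : K, 0 < rho /\
     forall x' y', `|x - x'| < rho -> `|y - y'| < rho -> ~ C n x' y'.
  by move=> n x y; apply: GG_closed.
have cover : forall x y, `|x1 - x| < r0 -> `|y1 - y| < r0 -> exists n, C n x y.
  move=> x y hx hy.
  have [p [q [p0 q0 Hc]]] := hyp x y (Hd1 _ (lt_le_trans hx r01)) (Hd2 _ (lt_le_trans hy r02)).
  case: p p0 Hc => [//|p'] _; case: q q0 => [//|q'] _ Hc.
  exists (pickle (p', q')); by rewrite /C /e pickleK.
have [n [x0 [y0 [r [r0' hloc]]]]] := baire2 archi Ccl r00 cover.
exact: (local_comm hmul hprime hf r0' hloc).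
Qed.

Theorem theorem2p4 (R : realType) :
  theorem2p4_over R /\ theorem2p4_over R[i].
Proof. split; apply: main_over; [exact: archi_real | exact: archi_cplx]. Qed.
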